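(* A group $G$ is GCA-surjunctive if and only if $G$ is Hopfian and surjunctive.
   Context: For a finite set $A$ and a group $G$, $A^G$ is the set of functions $G\to A$ with shift action $(g\cdot x)(k):=x(g^{-1}k)$. For $\phi\in\mathrm{End}(G)$, a $\phi$-cellular automaton $A^G\to A^G$ is a map $\mathcal{T}$ for which there exist a finite $T\subseteq G$ and $\mu:A^T\to A$ with $\mathcal{T}(x)(h)=\mu((\phi(h^{-1})\cdot x)|_T)$ for all $x\in A^G,h\in G$; classical cellular automata are the $\mathrm{id}$-cellular automata. $\mathrm{GCA}(A^G)$ is the set of all $\phi$-cellular automata $A^G\to A^G$ over all $\phi\in\mathrm{End}(G)$. $G$ is surjunctive if for every finite set $A$, every injective classical cellular automaton $A^G\to A^G$ is surjective. $G$ is GCA-surjunctive if for every finite set $A$, every injective $\mathcal{T}\in\mathrm{GCA}(A^G)$ is surjective. $G$ is Hopfian if every surjective endomorphism of $G$ is injective. *)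

(* Defs.v *)
From mathcomp Require Import all_boot.
From Stdlib Require List. Import List.ListNotations.

Set Implicit Arguments.
Unset Strict Implicit.
Unset Printing Implicit Defensive.

Record AbsGroup := {
  gcar :> Type;
  gmul : gcar -> gcar -> gcar;
  gone : gcar;
  ginv : gcar -> gcar;
  gmulA : forall x y z, gmul x (gmul y z) = gmul (gmul x y) z;
  gmul1g : forall x, gmul gone x = x;
  gmulVg : forall x, gmul (ginv x) x = gone
}.

Section GCA.
Variable G : AbsGroup.

Definition is_endo (phi : G -> G) : Prop :=
  forall x y, phi (gmul x y) = gmul (phi x) (phi y).

Definition Hopfian_group : Prop :=
  forall phi : G -> G, is_endo phi ->
    (forall y, exists x, phi x = y) -> forall x y, phi x = phi y -> x = y.

Variable A : finType.

Definition shift (g : G) (x : G -> A) : G -> A := fun k => x (gmul (ginv g) k).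

Definition finite_subset (T : G -> Prop) : Prop :=
  exists s : seq G, forall t, T t -> List.In t s.

Definition is_phi_CA (phi : G -> G) (tau : (G -> A) -> (G -> A)) : Prop :=
  exists T : G -> Prop, finite_subset T /\
  exists mu : ({t : G | T t} -> A) -> A,
    forall (x : G -> A) (h : G),
      tau x h = mu (fun t => shift (phi (ginv h)) x (proj1_sig t)).

Definition is_CA (tau : (G -> A) -> (G -> A)) : Prop := is_phi_CA id tau.

Definition is_GCA (tau : (G -> A) -> (G -> A)) : Prop :=
  exists phi : G -> G, is_endo phi /\ is_phi_CA phi tau.

End GCA.

Definition injective_map (X Y : Type) (f : X -> Y) : Prop :=
  forall a b, f a = f b -> a = b.
Definition surjective_map (X Y : Type) (f : X -> Y) : Prop :=
  forall y, exists x, f x = y.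

Definition surjunctive_group (G : AbsGroup) : Prop :=
  forall (A : finType) (tau : (G -> A) -> (G -> A)),
    is_CA tau -> injective_map tau -> surjective_map tau.

Definition GCA_surjunctive_group (G : AbsGroup) : Prop :=
  forall (A : finType) (tau : (G -> A) -> (G -> A)),
    is_GCA tau -> injective_map tau -> surjective_map tau.

(* Main.v *)
Require Import Defs.
From mathcomp Require Import all_boot.
From Stdlib Require Import FunctionalExtensionality Classical ClassicalEpsilon.

Section GroupLemmas.
Variable G : AbsGroup.

Lemma gcancel_l (a b c : G) : gmul a b = gmul a c -> b = c.
Proof.
move=> H. rewrite -(gmul1g b) -(gmul1g c) -(gmulVg a) -!gmulA H. done.
Qed.

Lemma gmulgV (x : G) : gmul x (ginv x) = (gone G).
Proof.
set y := gmul x (ginv x).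
have yy : gmul y y = y.
  by rewrite /y gmulA -(gmulA x (ginv x) x) gmulVg -gmulA gmul1g.
have := f_equal (gmul (ginv y)) yy.
by rewrite gmulA gmulVg gmul1g.
Qed.

Lemma gmulg1 (x : G) : gmul x (gone G) = x.
Proof. by rewrite -(gmulVg x) gmulA gmulgV gmul1g. Qed.

Lemma ginv_uniq (a b : G) : gmul a b = (gone G) -> a = ginv b.
Proof.
move=> H. by rewrite -(gmulg1 a) -(gmulgV b) gmulA H gmul1g.
Qed.

Lemma ginvK (a : G) : ginv (ginv a) = a.
Proof. by rewrite -(@ginv_uniq _ _ (gmulgV a)). Qed.

Lemma endo1 (phi : G -> G) : is_endo phi -> phi (gone G) = (gone G).
Proof.
move=> E. apply: (@gcancel_l (phi (gone G))).
by rewrite -E gmul1g gmulg1.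
Qed.

Lemma endoV (phi : G -> G) h : is_endo phi -> phi (ginv h) = ginv (phi h).
Proof.
move=> E. apply: ginv_uniq. by rewrite -E gmulVg endo1.
Qed.
End GroupLemmas.

Theorem proposition2p7 (G : AbsGroup) :
  GCA_surjunctive_group G <-> Hopfian_group G /\ surjunctive_group G.
Proof.
split.
- move=> HG; split.
  + move=> phi E Hs a b Hab.
    pose tau := fun (x : G -> bool) (h : G) => x (phi h).
    have Htau : is_GCA tau.
      exists phi; split => //.
      exists (fun t => t = (gone G)); split.
        by exists [:: (gone G)] => t ->; left.
      exists (fun f => f (exist (fun t => t = gone G) (gone G) erefl)) => x h /=.
      by rewrite /tau /shift endoV // ginvK gmulg1.
    have Hinj : injective_map tau.
      move=> x y Hxy; apply: functional_extensionality => k.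
      have [h <-] := Hs k.
      exact: (f_equal (fun f => f h) Hxy).
    have [x Hx] := HG _ _ Htau Hinj
      (fun k => if excluded_middle_informative (k = a) then true else false).
    apply: NNPP => Nab.
    have := f_equal (fun f => f a) Hx; have := f_equal (fun f => f b) Hx.
    rewrite /tau /= Hab => ->.
    destruct (excluded_middle_informative (b = a)) as [e|n]; first by case: Nab.
    by destruct (excluded_middle_informative (a = a)) as [e2|n2].
  + move=> A tau Hca Hinj. apply: HG => //.
    by exists id; split.
- move=> [Hhop Hsur] A tau [phi [E [T [HT [mu Hmu]]]]] Hinj z.
  pose sigma := fun (x : G -> A) (h : G) =>
    mu (fun t => shift (ginv h) x (proj1_sig t)).
  have Hts : forall x h, tau x h = sigma x (phi h).
    by move=> x h; rewrite Hmu /sigma endoV.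
  have Hsca : is_CA sigma.
    by exists T; split => //; exists mu.
  have Hsinj : injective_map sigma.
    move=> x y Hxy; apply: Hinj; apply: functional_extensionality => h.
    by rewrite !Hts Hxy.
  have Hssur := Hsur A sigma Hsca Hsinj.
  case: (pickP (fun a => a != z (gone G))) => [a1 Ha1 | Hall].
  + have phisur : forall g, exists x, phi x = g.
      move=> g; apply: NNPP => Ng.
      pose y := fun k => if excluded_middle_informative (k = g) then a1 else z (gone G).
      have [u Hu] := Hssur y.
      have [v Hv] := Hssur (fun _ => z (gone G)).
      have Huv : u = v.
        apply: Hinj; apply: functional_extensionality => h.
        rewrite !Hts Hu Hv /y.
        destruct (excluded_middle_informative (phi h = g)) as [Hh|Hh] => //.
        by case: Ng; exists h.
      have := f_equal (fun f => f g) Hu.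
      rewrite Huv Hv /y.
      destruct (excluded_middle_informative (g = g)) as [e|n] => // Heq.
      by move: Ha1; rewrite /= in Heq; rewrite Heq eqxx.
    have phiinj := Hhop phi E phisur.
    have psiex : forall k, {x | phi x = k}.
      move=> k; apply: constructive_indefinite_description; exact: phisur.
    pose psi := fun k => proj1_sig (psiex k).
    have [u Hu] := Hssur (fun k => z (psi k)).
    exists u; apply: functional_extensionality => h.
    rewrite Hts Hu /psi; case: (psiex (phi h)) => x /= /phiinj -> //.
  + exists z; apply: functional_extensionality => h.
    have := Hall (tau z h); have := Hall (z h).
    by move=> /negbFE/eqP -> /negbFE/eqP ->.
Qed.
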